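(* For every integer $r>0$ and every integer $n\ge 1$, \[B_{n-1,r}\,B_{n+1,r}\ge B_{n,r}^2.\]
   Context: For integers $n\ge k\ge r\ge 0$, the $r$-Stirling number of the second kind $\genfrac\{\}{0pt}{}{n}{k}_r$ is the number of partitions of the set $\{1,2,\dots,n\}$ into $k$ nonempty, pairwise disjoint subsets such that the elements $1,\dots,r$ lie in distinct subsets (it is taken to be $0$ when $k>n$). The $r$-Bell numbers are $B_{n,r}=\sum_{k=0}^n\genfrac\{\}{0pt}{}{n+r}{k+r}_r$, i.e. the number of partitions of a set of $n+r$ elements in which $r$ specified elements lie in distinct blocks. *)

(* Defs.v *)
From mathcomp Require Import all_boot.
Set Implicit Arguments. Unset Strict Implicit. Unset Printing Implicit Defensive.

(* r-Stirling number of the second kind {n k}_r : the number of partitions of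
   {1..n} (here 'I_n = {0..n-1}) into k nonempty pairwise disjoint blocks such that
   the first r elements lie in distinct blocks. *)
Definition rstirling2 (r n k : nat) : nat :=
  #|[set P : {set {set 'I_n}} |
      [&& partition P [set: 'I_n], #|P| == k &
          [forall i : 'I_n, forall j : 'I_n,
             [&& (i < r)%N, (j < r)%N & i != j] ==> (pblock P i != pblock P j)]]]|.

Definition rbell (n r : nat) : nat := \sum_(0 <= k < n.+1) rstirling2 r (n + r) (k + r).

(* Main.v *)
Require Import Defs.
From mathcomp Require Import all_boot all_order all_algebra.
From mathcomp Require Import ring lra.
Set Implicit Arguments. Unset Strict Implicit. Unset Printing Implicit Defensive.

Definition cond' N r (P : {set {set 'I_N}}) : bool :=
  [forall B in P, forall i : 'I_N, forall j : 'I_N,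
     [&& i \in B, j \in B, (i < r)%N & (j < r)%N] ==> (i == j)].

Lemma cond'P N r (P : {set {set 'I_N}}) :
  reflect (forall B i j, B \in P -> i \in B -> j \in B -> (i < r)%N -> (j < r)%N -> i = j)
          (cond' r P).
Proof.
apply: (iffP idP).
  move=> /forall_inP H B i j BP iB jB ir jr.
  by move: (H B BP) => /forallP/(_ i)/forallP/(_ j); rewrite iB jB ir jr /= => /eqP.
move=> H; apply/forall_inP => B BP; apply/forallP => i; apply/forallP => j.
by apply/implyP => /and4P[iB jB ir jr]; apply/eqP; apply: H BP iB jB ir jr.
Qed.

Lemma condE N r (P : {set {set 'I_N}}) D :
  partition P D -> [set i : 'I_N | (i < r)%N] \subset D ->
  [forall i : 'I_N, forall j : 'I_N,
     [&& (i < r)%N, (j < r)%N & i != j] ==> (pblock P i != pblock P j)] = cond' r P.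
Proof.
move=> /and3P[/eqP cP tP _] sD.
have inC (i : 'I_N) : (i < r)%N -> i \in cover P.
  by move=> ir; rewrite cP; apply: (subsetP sD); rewrite inE.
apply/idP/idP.
  move=> H; apply/cond'P => B i j BP iB jB ir jr.
  apply/eqP; apply: contraT => nij.
  move: H => /forallP/(_ i)/forallP/(_ j); rewrite ir jr nij /=.
  by rewrite (def_pblock tP BP iB) (def_pblock tP BP jB) eqxx.
move/cond'P => H; apply/forallP => i; apply/forallP => j.
apply/implyP => /and3P[ir jr nij]; apply/negP => /eqP e.
have iB : i \in pblock P i by rewrite mem_pblock inC.
have jB : j \in pblock P i by rewrite e mem_pblock inC.
by move: nij; rewrite (H _ _ _ (pblock_mem (inC _ ir)) iB jB ir jr) eqxx.
Qed.

Definition valid N r (D : {set 'I_N}) k (P : {set {set 'I_N}}) : bool :=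
  [&& partition P D, #|P| == k & cond' r P].

Lemma setD1_notin (T : finType) (A : {set T}) a : a \notin A -> A :\ a = A.
Proof. by move=> H; apply/setP => y; rewrite !inE; case: eqP => // ->; rewrite (negbTE H). Qed.

Lemma part_sub (T : finType) (P : {set {set T}}) D B : partition P D -> B \in P -> B \subset D.
Proof. by move=> /and3P[/eqP <- _ _] BP; apply: bigcup_sup. Qed.

Definition gmap N (x : 'I_N) (P : {set {set 'I_N}}) :=
  ([set B :\ x | B in P] :\ set0, pblock P x :\ x).
Definition hmap N (x : 'I_N) (QB : {set {set 'I_N}} * {set 'I_N}) :=
  (x |: QB.2) |: (QB.1 :\ QB.2).

Section Bij.
Variables (N r : nat) (D : {set 'I_N}) (x : 'I_N) (k : nat).
Hypotheses (xD : x \in D) (xr : ~~ (x < r)%N).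

Lemma gP P : valid r D k.+1 P ->
  (valid r (D :\ x) k.+1 (gmap x P).1 && ((gmap x P).2 \in (gmap x P).1)) ||
  (valid r (D :\ x) k (gmap x P).1 && ((gmap x P).2 == set0)).
Proof.
move=> /and3P[pP /eqP cardP /cond'P cP].
have /and3P[/eqP covP tP n0P] := pP.
set M := [set B :\ x | B in P].
have xcov : x \in cover P by rewrite covP.
have BxP : pblock P x \in P by apply: pblock_mem.
have xBx : x \in pblock P x by rewrite mem_pblock.
have inj : {in P &, injective (fun B => B :\ x)}.
  move=> B1 B2 B1P B2P /= e.
  have [y yB1] : exists y, y \in B1.
    by apply/set0Pn; apply: contraNneq n0P => <-.
  have [z zB2] : exists z, z \in B2.
    by apply/set0Pn; apply: contraNneq n0P => <-.
  have common : exists w, (w \in B1) && (w \in B2).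
    case: (eqVneq y x) => [yx|yx].
      case: (eqVneq z x) => [zx|zx].
        by exists x; rewrite -{1}yx -zx yB1 zB2.
      exists z; rewrite zB2 andbT.
      have : z \in B2 :\ x by rewrite !inE zx zB2.
      by rewrite -e inE => /andP[].
    exists y; rewrite yB1 /=.
    have : y \in B1 :\ x by rewrite !inE yx yB1.
    by rewrite e inE => /andP[].
  case: common => w /andP[wB1 wB2].
  by rewrite -(def_pblock tP B1P wB1) (def_pblock tP B2P wB2).
have cardM : #|M| = k.+1 by rewrite card_in_imset // cardP.
have covM : cover M = D :\ x.
  rewrite cover_imset; apply/setP => y; rewrite !inE -covP.
  apply/bigcupP/andP => [[B BP]|[yx /bigcupP[B BP yB]]].
    by rewrite !inE => /andP[-> yB]; split=> //; apply/bigcupP; exists B.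
  by exists B; rewrite // !inE yx.
have tM : trivIset M.
  apply/trivIsetP => _ _ /imsetP[B1 B1P ->] /imsetP[B2 B2P ->] ne.
  have ne' : B1 != B2 by apply: contraNneq ne => ->.
  have := (trivIsetP tP) _ _ B1P B2P ne'.
  by apply: disjointW; apply: subsetDl.
have covQ : cover (M :\ set0) = D :\ x.
  rewrite -covM; apply/setP => y; apply/bigcupP/bigcupP => [[B] | [B BM yB]].
    by rewrite inE => /andP[_ BM] yB; exists B.
  by exists B; rewrite // !inE BM andbT; apply/set0Pn; exists y.
have pQ : partition (M :\ set0) (D :\ x).
  by rewrite /partition covQ eqxx (trivIsetS (subsetDl _ _) tM) !inE eqxx.
have cQ : cond' r (M :\ set0).
  apply/cond'P => B' i j; rewrite inE => /andP[_ /imsetP[B BP ->]].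
  rewrite !inE => /andP[_ iB] /andP[_ jB]; exact: cP BP iB jB.
have M0 : (set0 \in M) = (pblock P x :\ x == set0).
  apply/imsetP/eqP => [[B BP e]|e]; last by exists (pblock P x) => //; rewrite e.
  have xB : x \in B.
    by apply: contraT => xnB; move: n0P; rewrite e setD1_notin // BP.
  by rewrite (def_pblock tP BP xB) -e.
have := cardsD1 set0 M; rewrite cardM M0 /gmap /=.
case: eqP => [-> /= [cQk]|ne /= [cQk]]; apply/orP; [right|left].
  by rewrite andbT /valid -/M pQ cQ cQk add0n !eqxx.
rewrite add0n in cQk; rewrite /valid -/M pQ cQ -cQk eqxx /= !inE (imset_f (fun B => B :\ x) BxP) andbT.
by apply/eqP.
Qed.

Lemma ghK P : valid r D k.+1 P -> hmap x (gmap x P) = P.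
Proof.
move=> /and3P[pP _ _].
have /and3P[/eqP covP tP n0P] := pP.
have xcov : x \in cover P by rewrite covP.
have BxP : pblock P x \in P by apply: pblock_mem.
have xBx : x \in pblock P x by rewrite mem_pblock.
rewrite /hmap /gmap /= setD1K //.
apply/setP => C; rewrite !inE; apply/idP/idP.
  case/orP => [/eqP -> //| /andP[ne /andP[n0 /imsetP[B BP eC]]]].
  have xB : x \notin B.
    apply: contra ne => xB; by rewrite eC (def_pblock tP BP xB).
  by rewrite eC setD1_notin.
move=> CP; case: (eqVneq C (pblock P x)) => //= neC.
have xC : x \notin C.
  by apply: contra neC => xC; rewrite (def_pblock tP CP xC).
apply/andP; split; last apply/andP; last split.
- apply/eqP => eC.
  have [y yC] : exists y, y \in C.
    by apply/set0Pn; apply: contraNneq n0P => <-.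
  have : y \in pblock P x by move: yC; rewrite eC inE => /andP[].
  move=> yBx; move/eqP: neC; apply.
  by rewrite -(def_pblock tP CP yC) (def_pblock tP BxP yBx).
- by apply: contraNneq n0P => <-.
- by apply/imsetP; exists C => //; rewrite setD1_notin.
Qed.

Lemma hP Q B :
  (valid r (D :\ x) k.+1 Q && (B \in Q)) || (valid r (D :\ x) k Q && (B == set0)) ->
  valid r D k.+1 (hmap x (Q, B)) /\ gmap x (hmap x (Q, B)) = (Q, B).
Proof.
move=> H.
have [pQ cQ cardQ BQ] : [/\ partition Q (D :\ x), cond' r Q, #|Q :\ B| = k &
                         (B \in Q) || (B == set0)].
  case/orP: H => /andP[/and3P[pQ /eqP cQ cdQ] HB].
    split => //; last by rewrite HB.
    by move: (cardsD1 B Q); rewrite cQ HB => -[].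
  split => //; last by rewrite HB orbT.
  move/eqP: HB => ->; rewrite setD1_notin ?cQ //.
  by case/and3P: pQ.
have /and3P[/eqP covQ tQ n0Q] := pQ.
move/cond'P: cQ => cQ.
have xnB : x \notin B.
  case/orP: BQ => [BQ|/eqP->]; last by rewrite inE.
  by apply/negP => xB; move: (subsetP (part_sub pQ BQ) x xB); rewrite !inE eqxx.
have xnC C : C \in Q -> x \notin C.
  by move=> CQ; apply/negP => xC; move: (subsetP (part_sub pQ CQ) x xC); rewrite !inE eqxx.
set A := x |: B.
have dis : {in Q :\ B, forall C : {set 'I_N}, [disjoint A & C]}.
  move=> C; rewrite !inE => /andP[neCB CQ].
  rewrite -setI_eq0; apply/eqP/setP => y; rewrite !inE.
  case: (eqVneq y x) => [->|yx] /=; first by rewrite (negbTE (xnC C CQ)).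
  apply/negP => /andP[yB yC].
  case/orP: BQ => [BQ|/eqP eB]; last by move: yB; rewrite eB inE.
  move/trivIsetP: tQ => tQ'.
  have nBC : B != C by rewrite eq_sym.
  have := tQ' _ _ BQ CQ nBC.
  by move/disjointFr => /(_ _ yB); rewrite yC.
have n0Q' : set0 \notin Q :\ B by rewrite inE negb_and n0Q orbT.
have [tP AnQ] := trivIsetU1 dis (trivIsetS (subsetDl _ _) tQ) n0Q'.
have AP : A \in hmap x (Q, B) by rewrite /hmap /= setU11.
have xA : x \in A by rewrite setU11.
have covP : cover (hmap x (Q, B)) = D.
  apply/setP => y; apply/bigcupP/idP.
    case=> C; rewrite /hmap /= !inE => /orP[/eqP ->|/andP[_ CQ]] yC.
      move: yC; rewrite !inE => /orP[/eqP -> //|yB].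
      case/orP: BQ => [BQ|/eqP eB]; last by move: yB; rewrite eB inE.
      have : y \in cover Q by apply/bigcupP; exists B.
      by rewrite covQ inE => /andP[].
    have : y \in cover Q by apply/bigcupP; exists C.
    by rewrite covQ inE => /andP[].
  move=> yD; case: (eqVneq y x) => [->|yx]; first by exists A.
  have : y \in cover Q by rewrite covQ !inE yx.
  case/bigcupP => C CQ yC.
  case: (eqVneq C B) => [eCB|neCB].
    by exists A => //; rewrite !inE -eCB yC orbT.
  by exists C => //; rewrite /hmap /= !inE neCB CQ orbT.
have validP : valid r D k.+1 (hmap x (Q, B)).
  apply/and3P; split.
  - rewrite /partition covP eqxx tP /= /hmap /= !inE negb_or.
    rewrite (negbTE n0Q) andbF andbT; apply/eqP => e.
    by move: xA; rewrite /A -e inE.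
  - by rewrite /hmap /= cardsU1 AnQ cardQ.
  - apply/cond'P => C i j; rewrite /hmap /= !inE => /orP[/eqP ->|/andP[_ CQ]];
      last exact: cQ.
    have ix (l : 'I_N) : (l < r)%N -> l != x by move=> lr; apply: contraNneq xr => <-.
    rewrite !inE => /orP[/eqP e|iB] /orP[/eqP e'|jB] ir jr;
      try by [move: (ix _ ir); rewrite e eqxx|move: (ix _ jr); rewrite e' eqxx].
    case/orP: BQ => [BQ|/eqP eB]; last by move: iB; rewrite eB inE.
    exact: cQ BQ iB jB ir jr.
split => //.
rewrite /gmap (def_pblock tP AP xA) /A setU1K //; congr (_, _).
apply/setP => C; rewrite !inE; apply/andP/idP.
  case=> n0 /imsetP[C0]; rewrite /hmap /= !inE => /orP[/eqP ->|/andP[_ C0Q]] eC;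
    rewrite eC.
    rewrite setU1K //; case/orP: BQ => // /eqP eB.
    by move: n0; rewrite eC setU1K // eB eqxx.
  by rewrite setD1_notin // xnC.
move=> CQ; split; first by apply: contraNneq n0Q => <-.
apply/imsetP; case: (eqVneq C B) => [->|neCB].
  by exists A; rewrite // setU1K.
exists C; last by rewrite setD1_notin ?xnC.
by rewrite /hmap /= !inE neCB CQ orbT.
Qed.

End Bij.

Lemma sum_bool_card (T : finType) (b : pred T) :
  \sum_(t : T) (b t : nat) = #|[set t | b t]|.
Proof.
rewrite -sum1_card [RHS]big_mkcond /=; apply: eq_bigr => t _; rewrite inE.
by case: (b t).
Qed.

Lemma card_step N r (D : {set 'I_N}) (x : 'I_N) k :
  x \in D -> ~~ (x < r)%N ->
  #|[set P | valid r D k.+1 P]| =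
    k.+1 * #|[set Q | valid r (D :\ x) k.+1 Q]| + #|[set Q | valid r (D :\ x) k Q]|.
Proof.
move=> xD xr.
set V := [set P | valid r D k.+1 P].
set S := [set QB : {set {set 'I_N}} * {set 'I_N} |
           (valid r (D :\ x) k.+1 QB.1 && (QB.2 \in QB.1)) ||
           (valid r (D :\ x) k QB.1 && (QB.2 == set0))].
have -> : #|V| = #|S|.
  rewrite -(card_in_imset (f := gmap x) (D := V)); last first.
    move=> P1 P2; rewrite !inE => v1 v2 e.
    by rewrite -(ghK xD v1) e (ghK xD v2).
  congr #|pred_of_set _|; apply/setP => QB; apply/imsetP/idP.
    by case=> P; rewrite inE => PV ->; rewrite inE; apply: gP xD _ _.
  case: QB => Q B; rewrite inE => HS.
  have [hv hg] := hP xD xr HS.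
  by exists (hmap x (Q, B)); rewrite ?inE.
have -> : #|S| = \sum_(Q : {set {set 'I_N}}) \sum_(B : {set 'I_N} | (Q, B) \in S) 1.
  symmetry; rewrite pair_big_dep /= (eq_bigl (fun p => p \in S)); first by rewrite sum1_card.
  by case.
have inner Q : \sum_(B : {set 'I_N} | (Q, B) \in S) 1 =
    (valid r (D :\ x) k.+1 Q : nat) * k.+1 + (valid r (D :\ x) k Q : nat).
  rewrite (eq_bigl (fun B => B \in [set B | (Q, B) \in S])); last by move=> B; rewrite inE.
  rewrite sum1_card.
  case v1 : (valid r (D :\ x) k.+1 Q).
    have v0 : valid r (D :\ x) k Q = false.
      move: v1; rewrite /valid => /and3P[_ /eqP -> _].
      by rewrite eqn_leq ltnn andbF.
    rewrite v0 mul1n addn0.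
    have -> : [set B | (Q, B) \in S] = Q.
      by apply/setP => B; rewrite !inE /= v1 v0 /= orbF.
    by move: v1 => /and3P[_ /eqP -> _].
  case v0 : (valid r (D :\ x) k Q).
    have -> : [set B | (Q, B) \in S] = [set set0].
      by apply/setP => B; rewrite !inE /= v1 v0.
    by rewrite cards1.
  have -> : [set B | (Q, B) \in S] = set0.
    by apply/setP => B; rewrite !inE /= v1 v0.
  by rewrite cards0.
transitivity (\sum_(Q : {set {set 'I_N}})
  ((valid r (D :\ x) k.+1 Q : nat) * k.+1 + (valid r (D :\ x) k Q : nat))).
  by apply: eq_bigr => Q _; apply: inner.
rewrite big_split /= -big_distrl /=.
by rewrite !sum_bool_card mulnC.
Qed.

Fixpoint st (r m k : nat) : nat :=
  match m with
  | 0 => (k == r : nat)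
  | m'.+1 => match k with 0 => 0 | k'.+1 => k'.+1 * st r m' k'.+1 + st r m' k' end
  end.

Lemma card_spec N r : (r <= N)%N -> #|[set i : 'I_N | (i < r)%N]| = r.
Proof.
move=> rN.
have -> : [set i : 'I_N | (i < r)%N] = [set widen_ord rN j | j : 'I_r].
  apply/setP => i; rewrite inE; apply/idP/imsetP => [ir|[j _ ->]] //=.
  by exists (Ordinal ir) => //; apply: val_inj.
rewrite card_imset ?cardsT ?card_ord //.
by move=> a b /(congr1 val) /= /val_inj.
Qed.

Lemma base_count N r k : (r <= N)%N ->
  #|[set P | valid r [set i : 'I_N | (i < r)%N] k P]| = (k == r : nat).
Proof.
move=> rN; set S0 := [set i : 'I_N | (i < r)%N].
set Pd := [set [set i] | i in S0].
have claim1 P : valid r S0 k P -> P = Pd.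
  move=> /and3P[pP _ /cond'P cP].
  have /and3P[/eqP covP tP n0P] := pP.
  have single B i : B \in P -> i \in B -> B = [set i].
    move=> BP iB; apply/setP => j; rewrite inE; apply/idP/eqP => [jB|->//].
    have sB := part_sub pP BP.
    have ir : (i < r)%N by move: (subsetP sB i iB); rewrite inE.
    have jr : (j < r)%N by move: (subsetP sB j jB); rewrite inE.
    exact: cP BP jB iB jr ir.
  apply/setP => C; apply/idP/imsetP => [CP|[i iS ->]].
    have [i iC] : exists i, i \in C by apply/set0Pn; apply: contraNneq n0P => <-.
    exists i; last exact: single CP iC.
    by move: (subsetP (part_sub pP CP) i iC).
  have ic : i \in cover P by rewrite covP.
  rewrite -(single _ _ (pblock_mem ic) _) ?mem_pblock //.
  exact: pblock_mem.
have vPd : valid r S0 r Pd.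
  apply/and3P; split.
  - apply/and3P; split.
    + rewrite cover_imset; apply/eqP/setP => y; apply/bigcupP/idP => [[i iS]|yS].
        by move=> /set1P ->; move: iS; rewrite /S0 !inE.
      by apply: (@ex_intro2 _ _ _ y) => //; rewrite inE.
    + apply/trivIsetP => _ _ /imsetP[i _ ->] /imsetP[j _ ->] ne.
      rewrite disjoints1 inE; apply: contraNneq ne => ->; done.
    + apply/imsetP => -[i _ e]; have : i \in [set i] by rewrite inE.
      by rewrite -e inE.
  - rewrite card_imset ?card_spec //; exact: set1_inj.
  - apply/cond'P => B i j /imsetP[l _ ->]; rewrite !inE => /eqP -> /eqP -> //.
have -> : [set P | valid r S0 k P] = if k == r then [set Pd] else set0.
  apply/setP => P; rewrite inE; case: eqP => [ekr|ne].
    subst k; rewrite inE; apply/idP/eqP => [vP|->//]; exact: claim1 vP.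
  rewrite inE; apply/negP => vP; apply: ne.
  by have := vP; rewrite (claim1 _ vP) => /and3P[_ /eqP <- _]; move: vPd => /and3P[_ /eqP -> _].
by case: eqP => _; rewrite ?cards1 ?cards0.
Qed.

Lemma count_st N r : (r <= N)%N -> forall (D : {set 'I_N}) k,
  [set i : 'I_N | (i < r)%N] \subset D ->
  #|[set P | valid r D k P]| = st r (#|D| - r) k.
Proof.
move=> rN D; move eqm : (#|D| - r) => m; elim: m D eqm => [|m IH] D eqm k sD.
  have eD : [set i : 'I_N | (i < r)%N] = D.
    apply/eqP; rewrite eqEcard sD card_spec //.
    by move/eqP: eqm; rewrite subn_eq0.
  by rewrite -eD base_count.
have : ~~ (D \subset [set i : 'I_N | (i < r)%N]).
  apply/negP => sD'; move: (subset_leq_card sD'); rewrite card_spec //.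
  by rewrite -subn_eq0 eqm.
case/subsetPn => x xD; rewrite inE => xr.
have cD : #|D| = (#|D :\ x|).+1 by rewrite (cardsD1 x D) xD.
have sD' : [set i : 'I_N | (i < r)%N] \subset D :\ x.
  apply/subsetP => i iS; rewrite !inE (subsetP sD i iS) andbT.
  by apply: contraNneq xr => <-; move: iS; rewrite inE.
have rD : (r <= #|D :\ x|)%N by rewrite -(card_spec rN) subset_leq_card.
have eqm' : #|D :\ x| - r = m by move: eqm; rewrite cD subSn // => -[].
case: k => [|k].
  apply/eqP; rewrite cards_eq0; apply/eqP/setP => P; rewrite !inE.
  apply/negP => /and3P[/and3P[/eqP covP _ _] /eqP cP _].
  move/eqP: cP; rewrite cards_eq0 => /eqP P0.
  by move: xD; rewrite -covP P0 /cover big_set0 inE.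
by rewrite (card_step k xD xr) !IH.

Qed.

Lemma st_small r m k : k < r -> st r m k = 0.
Proof.
elim: m k => [|m IH] k kr /=; first by rewrite (ltn_eqF kr).
case: k kr => // k kr; rewrite !IH ?muln0 //; exact: ltnW.
Qed.

Lemma st_large r m k : m + r < k -> st r m k = 0.
Proof.
elim: m k => [|m IH] k kr /=; first by rewrite gtn_eqF.
case: k kr => // k kr; rewrite addSn ltnS in kr; rewrite !IH ?muln0 //.
exact: ltnW.
Qed.

Lemma ffact_step x k r : x ^_ k * (x + r) = x ^_ k.+1 + (k + r) * x ^_ k.
Proof.
case: (leqP k x) => [kx|xk].
  rewrite ffactnSr mulnC [_ * (x - k)]mulnC -mulnDl; congr (_ * _).
  by rewrite addnA subnK.
by rewrite !ffact_small // ?muln0 // ltnW.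
Qed.

Lemma sum_widen n1 n2 (F : nat -> nat) : n1 <= n2 -> (forall k, n1 <= k -> F k = 0) ->
  \sum_(k < n2) F k = \sum_(k < n1) F k.
Proof.
move=> le hF; rewrite (big_ord_widen n2 F le) [RHS]big_mkcond /=.
rewrite big_mkcond /=; apply: eq_bigr => k _; case: ifP => // /negbT.
by rewrite -leqNgt => /hF ->.
Qed.

Lemma st_poly r m x :
  (x + r.+1) ^ m = \sum_(k < m.+1) st r.+1 m (k + r.+1) * x ^_ k.
Proof.
elim: m => [|m IH].
  by rewrite big_ord_recl big_ord0 /= addn0 eqxx.
rewrite expnS IH mulnC big_distrl /=.
under eq_bigr => k _ do rewrite -mulnA ffact_step mulnDr.
rewrite big_split /=.
rewrite [RHS](eq_bigr (fun k : 'I_m.+2 =>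
   (k + r.+1) * st r.+1 m (k + r.+1) * x ^_ k + st r.+1 m (k + r) * x ^_ k)); last first.
  by move=> k _; rewrite addnS /= mulnDl.
rewrite big_split /= addnC; congr (_ + _).
  rewrite (@sum_widen _ _ (fun k => (k + r.+1) * st r.+1 m (k + r.+1) * x ^_ k) (leqnSn _)).
    by apply: eq_big => // k _; rewrite mulnCA mulnA.
  by move=> k mk; rewrite st_large ?muln0 ?mul0n // ltn_add2r.
rewrite [RHS]big_ord_recl /= add0n st_small ?mul0n ?add0n ?ltnSn //.
by apply: eq_bigr => k _; rewrite /bump /= add1n addSn addnS.
Qed.

Section RatPart.
Import Order.TTheory GRing.Theory Num.Theory.
Local Open Scope ring_scope.

Definition tt (m : nat) : rat := \sum_(i < m.+1) (-1) ^+ i / (i`!)%:R.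
Definition ww (d j : nat) : rat := tt (d - j) / (j`!)%:R.

Lemma fact_ne0 n : (n`!)%:R != 0 :> rat.
Proof. by rewrite pnatr_eq0 -lt0n fact_gt0. Qed.

Lemma fact_gt0r n : 0 < (n`!)%:R :> rat.
Proof. by rewrite ltr0n fact_gt0. Qed.

Lemma ttS m : tt m.+1 = tt m + (-1) ^+ m.+1 / (m.+1`!)%:R.
Proof. by rewrite /tt big_ord_recr. Qed.

Lemma tt_ge0_aux m : (if odd m then 0 else (m`!)%:R^-1) <= tt m.
Proof.
elim: m => [|m IH]; first by rewrite /tt big_ord1 /= expr0 div1r.
rewrite ttS -signr_odd /=; case: (odd m) IH => /= IH.
  by rewrite expr0 div1r -[X in X <= _]add0r lerD.
rewrite expr1 mulN1r.
have h : (m.+1`!)%:R^-1 <= (m`!)%:R^-1 :> rat.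
  by rewrite lef_pV2 ?posrE ?fact_gt0r // ler_nat factS leq_pmull.
by rewrite subr_ge0 (le_trans h IH).
Qed.

Lemma tt_ge0 m : 0 <= tt m.
Proof.
apply: le_trans (tt_ge0_aux m); case: ifP => // _.
by rewrite invr_ge0 ler0n.
Qed.

Lemma ww_ge0 d j : 0 <= ww d j.
Proof. by rewrite /ww divr_ge0 ?tt_ge0 ?ler0n. Qed.

Lemma key_binom n : (0 < n)%N ->
  \sum_(j < n.+1) (-1) ^+ (n - j) / (((n - j)`!)%:R * (j`!)%:R) = 0 :> rat.
Proof.
move=> n0.
rewrite (eq_bigr (fun j : 'I_n.+1 => (n`!)%:R^-1 * ((-1) ^+ (n - j) * 1 ^+ j *+ 'C(n, j)))); last first.
  move=> j _; have jn : (j <= n)%N by rewrite -ltnS.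
  have hb' : ('C(n,j))%:R * ((j`!)%:R * ((n-j)`!)%:R) = (n`!)%:R :> rat.
    by rewrite -!natrM bin_fact.
  have hC : ('C(n,j))%:R = (n`!)%:R / ((j`!)%:R * ((n-j)`!)%:R) :> rat.
    by rewrite -hb' mulfK // mulf_neq0 ?fact_ne0.
  rewrite expr1n mulr1 -(mulr_natr ((-1) ^+ (n - j))) hC.
  by field; rewrite ?fact_ne0.
by rewrite -mulr_sumr -exprDn addNr expr0n gtn_eqF // mulr0.
Qed.

Lemma a_sum d : \sum_(j < d.+1) tt (d - j) / (j`!)%:R = 1.
Proof.
elim: d => [|d IH].
  by rewrite big_ord1 /tt big_ord1 /= expr0 !divr1.
have K := key_binom (ltn0Sn d).
rewrite big_ord_recr /= subnn in K.
rewrite big_ord_recr /= subnn.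
rewrite (eq_bigr (fun j : 'I_d.+1 => tt (d - j) / (j`!)%:R +
   (-1) ^+ (d.+1 - j) / (((d.+1 - j)`!)%:R * (j`!)%:R))); last first.
  move=> j _; have jd : (j <= d)%N by rewrite -ltnS.
  by rewrite subSn // ttS mulrDl invfM mulrA.
rewrite big_split /= IH -addrA -[RHS]addr0; congr (_ + _).
rewrite -[RHS]K; congr (_ + _).
by rewrite /tt big_ord1 /= invfM mulrA.
Qed.

Lemma E_sum d k : (k <= d)%N -> \sum_(j < d.+1) ww d j * ((j ^_ k)%:R) = 1.
Proof.
elim: k d => [|k IH] d kd.
  by rewrite -[RHS](a_sum d); apply: eq_bigr => j _; rewrite ffactn0 mulr1.
case: d kd => // d kd.
rewrite big_ord_recl /= ffact0n /= mulr0 add0r -[RHS](IH d kd).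
apply: eq_bigr => j _; rewrite /ww /bump /= add1n subSS ffactSS factS !natrM.
by field; rewrite fact_ne0 /= addrC natr1 pnatr_eq0.
Qed.

Lemma dob r d m : (m <= d)%N ->
  \sum_(j < d.+1) ww d j * (((j + r.+1) ^ m)%N%:R) =
  (\sum_(k < m.+1) st r.+1 m (k + r.+1))%N%:R.
Proof.
move=> md.
have hF : forall k, (m.+1 <= k)%N -> (st r.+1 m (k + r.+1)) = 0%N.
  by move=> k mk; rewrite st_large // ltn_add2r.
have hw x : ((x + r.+1) ^ m = \sum_(k < d.+1) st r.+1 m (k + r.+1) * x ^_ k)%N.
  rewrite st_poly (@sum_widen m.+1 d.+1 (fun k => st r.+1 m (k + r.+1) * x ^_ k)) //.
  by move=> k mk; rewrite hF // mul0n.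
rewrite -(@sum_widen m.+1 d.+1 (fun k => st r.+1 m (k + r.+1))) //.
under eq_bigr => j _ do rewrite hw natr_sum mulr_sumr.
rewrite exchange_big natr_sum /=; apply: eq_bigr => k _.
transitivity ((st r.+1 m (k + r.+1))%:R * \sum_(j < d.+1) ww d j * (j ^_ k)%:R).
  by rewrite mulr_sumr; apply: eq_bigr => j _; rewrite natrM mulrCA.
by rewrite E_sum ?mulr1 // -ltnS.
Qed.

Lemma cs d m (w u : nat -> rat) : (forall j, 0 <= w j) -> (forall j, 0 <= u j) ->
  0 < \sum_(j < d) w j * u j ^+ m ->
  (\sum_(j < d) w j * u j ^+ m.+1) ^+ 2 <=
  (\sum_(j < d) w j * u j ^+ m) * (\sum_(j < d) w j * u j ^+ m.+2).
Proof.
move=> w0 u0.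
set C := \sum_(j < d) w j * u j ^+ m.
set B := \sum_(j < d) w j * u j ^+ m.+1.
set A := \sum_(j < d) w j * u j ^+ m.+2.
move=> C0.
have H l : 0 <= A - 2 * l * B + l ^+ 2 * C.
  have -> : A - 2 * l * B + l ^+ 2 * C = \sum_(j < d) w j * u j ^+ m * (u j - l) ^+ 2.
    rewrite (eq_bigr (fun j : 'I_d => w j * u j ^+ m.+2 - 2 * l * (w j * u j ^+ m.+1)
                                    + l ^+ 2 * (w j * u j ^+ m))); last first.
      by move=> j _; rewrite !exprS; ring.
    by rewrite big_split /= sumrB -!mulr_sumr.
  by apply: sumr_ge0 => j _; rewrite mulr_ge0 ?sqr_ge0 // mulr_ge0 ?exprn_ge0.
have := H (B / C).
have e : A - 2 * (B / C) * B + (B / C) ^+ 2 * C = (A * C - B ^+ 2) / C.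
  by field; rewrite gt_eqF.
by rewrite e ler_pdivlMr // mul0r subr_ge0 mulrC.
Qed.

End RatPart.

Lemma rstirling_st r n K : rstirling2 r (n + r) K = st r n K.
Proof.
rewrite /rstirling2; transitivity #|[set P | valid r [set: 'I_(n + r)] K P]|.
  apply: eq_card => P; rewrite !inE /valid.
  case pP : (partition P [set: 'I_(n + r)]) => //=.
  by rewrite (condE pP (subsetT _)).
by rewrite (count_st (leq_addl n r) K (subsetT _)) cardsT card_ord addnK.
Qed.

Lemma rbell_st n r : rbell n r = \sum_(k < n.+1) st r n (k + r).
Proof. by rewrite /rbell big_mkord; apply: eq_bigr => k _; rewrite rstirling_st. Qed.

Lemma st_diag r m : st r m (m + r) = 1.
Proof.
elim: m => [|m IH] /=; first by rewrite eqxx.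
by rewrite IH st_large ?muln0 // ltnSn.
Qed.

Lemma rbell_gt0 m r : 0 < rbell m r.
Proof. by rewrite rbell_st big_ord_recr /= st_diag addn1. Qed.

Section Final.
Import Order.TTheory GRing.Theory Num.Theory.
Local Open Scope ring_scope.

Lemma final_ineq r m :
  ((rbell m.+1 r.+1) ^ 2 <= rbell m r.+1 * rbell m.+2 r.+1)%N.
Proof.
set d := m.+2.
have Sp p : (p <= d)%N ->
    \sum_(j < d.+1) ww d j * ((j + r.+1)%:R) ^+ p = (rbell p r.+1)%:R :> rat.
  move=> pd; rewrite rbell_st -(dob r pd).
  by apply: eq_bigr => j _; rewrite natrX.
have := @cs d.+1 m (ww d) (fun j => (j + r.+1)%:R) (ww_ge0 d) (fun j => ler0n _ _).
have h0 : (m <= d)%N by rewrite /d leqW.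
have h1 : (m.+1 <= d)%N by rewrite /d.
have h2 : (m.+2 <= d)%N by rewrite /d.
rewrite (Sp _ h0) (Sp _ h1) (Sp _ h2) ltr0n rbell_gt0 => /(_ isT).
by rewrite -natrX -natrM ler_nat.
Qed.
End Final.

Theorem mainTheorem6 (r n : nat) (hr : (0 < r)%N) (hn : (1 <= n)%N) :
  (rbell n r ^ 2 <= rbell n.-1 r * rbell n.+1 r)%N.
Proof.
case: r hr => // r _; case: n hn => // m _ /=.
exact: final_ineq.
Qed.
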